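(* Fix a context $s$ of a contextual bandit with finite action set $\mathcal{A}$, a policy $\pi_{\mathrm{old}}(\cdot\mid s)$ with full support, a reward $r(s,\cdot)$ that is not constant on $\mathcal{A}$, a constant $\delta(s)>0$ and $\epsilon\in(0,1)$. Let $A(a)=r(s,a)-\mathbb{E}_{a'\sim\pi_{\mathrm{old}}}[r(s,a')]$ and, for $\bar{\pi}(\cdot\mid s)\in\Delta(\mathcal{A})$ with $\rho(a)=\bar{\pi}(a\mid s)/\pi_{\mathrm{old}}(a\mid s)$, $$\mathfrak{D}^{\mathrm{GSPO}}_{\pi_{\mathrm{old}}}(\bar{\pi}\mid s)=\mathbb{E}_{a\sim\pi_{\mathrm{old}}}\Big[\rho(a)A(a)-\min\Big(\frac{\rho(a)A(a)}{\delta(s)},\frac{\mathrm{clip}(\rho(a),1\pm\epsilon)A(a)}{\delta(s)}\Big)\Big].$$ Then $\mathfrak{D}^{\mathrm{GSPO}}_{\pi_{\mathrm{old}}}(\bar{\pi}\mid s)\ge0$ for all $\bar{\pi}(\cdot\mid s)\in\Delta(\mathcal{A})$ if and only if $\delta(s)=1$. Consequently, the drift is nonnegative at every context for all such policies if and only if $\delta\equiv1$.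
   Context: This is the drift functional induced by a PPO-style clipped objective with group-variance-normalized advantages $A/\delta(s)$ (as in GSPO), where $\delta(s)$ is the (positive) standard deviation of rewards in the group sampled for context $s$, treated as a fixed positive number. $\mathrm{clip}(x,1\pm\epsilon)=\min(\max(x,1-\epsilon),1+\epsilon)$. *)

(* Defs.v *)
From mathcomp Require Import all_boot all_order all_algebra.
Set Implicit Arguments. Unset Strict Implicit. Unset Printing Implicit Defensive.
Import Order.TTheory GRing.Theory Num.Theory.
Local Open Scope ring_scope.

Definition clip (R : realFieldType) (x lo hi : R) : R := Num.min (Num.max x lo) hi.

Definition in_simplex (R : realFieldType) (A : finType) (p : A -> R) : Prop :=
  (forall a, 0 <= p a) /\ \sum_(a : A) p a = 1.

Definition adv (R : realFieldType) (A : finType) (pi_old r : A -> R) (a : A) : R :=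
  r a - \sum_(b : A) pi_old b * r b.

Definition drift_gspo (R : realFieldType) (A : finType)
  (pi_old r : A -> R) (delta eps : R) (pibar : A -> R) : R :=
  \sum_(a : A) pi_old a *
    (let rho := pibar a / pi_old a in
     rho * adv pi_old r a
     - Num.min (rho * adv pi_old r a / delta)
               (clip rho (1 - eps) (1 + eps) * adv pi_old r a / delta)).

(* Main.v *)
Require Import Defs.
From mathcomp Require Import all_boot all_order all_algebra.
From mathcomp Require Import ring lra.
Import Order.TTheory GRing.Theory Num.Theory.
Local Open Scope ring_scope.

Section Aux.
Variables (R : realFieldType) (A : finType).

Lemma sum_ind (x : A) (f : A -> R) : \sum_a (a == x)%:R * f a = f x.
Proof.
rewrite (bigD1 x) //= eqxx mul1r big1 ?addr0 // => a /negbTE ->.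
by rewrite mul0r.
Qed.

Lemma simplex_le1 (p : A -> R) y : in_simplex p -> p y <= 1.
Proof.
move=> [p0 p1]; rewrite -p1 (bigD1 y) //= lerDl.
by apply: sumr_ge0 => a _.
Qed.

Lemma adv_sum (p r : A -> R) : in_simplex p -> \sum_a p a * adv p r a = 0.
Proof.
move=> [_ p1]; rewrite /adv.
under eq_bigr => a _ do rewrite mulrBr.
by rewrite sumrB -mulr_suml p1 mul1r subrr.
Qed.

Lemma part1 (pi_old r : A -> R) (delta eps : R) :
    in_simplex pi_old -> (forall a, 0 < pi_old a) ->
    (exists a b, r a != r b) ->
    0 < delta -> 0 < eps -> eps < 1 ->
    ((forall pibar : A -> R, in_simplex pibar -> 0 <= drift_gspo pi_old r delta eps pibar)
     <-> delta = 1).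
Proof.
move=> Hs Hp [x [y Hxy]] Hd He He1; split; last first.
  move=> -> pibar _; rewrite /drift_gspo; apply: sumr_ge0 => a _.
  apply: mulr_ge0; first exact: ltW.
  by rewrite !divr1 subr_ge0 ge_min lexx.
move=> H; apply/eqP; apply/negPn/negP => Hd1.
have xy : x != y by apply: contraNneq Hxy => ->.
set k := (delta - 1) * (r x - r y).
have k0 : k != 0 by rewrite mulf_neq0 // subr_eq0.
set c := eps * pi_old x * pi_old y.
have c0 : 0 < c by rewrite !mulr_gt0.
set u := - c * Num.sg k.
pose d a : R := (a == x)%:R - (a == y)%:R.
pose pibar a := pi_old a + u * d a.
have Hu : `|u| = c by rewrite normrM normrN normr_sg k0 mulr1 gtr0_norm.
have Hpx := @simplex_le1 _ x Hs; have Hpy := @simplex_le1 _ y Hs.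
have Hb a : `|u * d a| <= eps * pi_old a.
  rewrite /d; have [->|ax] := eqVneq a x.
    rewrite ?eqxx (negbTE xy) subr0 mulr1 Hu /c.
    rewrite -mulrA ler_pM2l // ger_pMr //.
  have [->|ay] := eqVneq a y.
    rewrite ?eqxx ?subrr sub0r mulrN1 normrN Hu /c.
    by rewrite -mulrA ler_pM2l // ger_pMl //.
    by rewrite subrr mulr0 normr0 mulr_ge0 // ltW.
have Hb2 a : - (eps * pi_old a) <= u * d a <= eps * pi_old a by rewrite -ler_norml.
have Hsum0 v f : \sum_a (pi_old a + v * d a) * f a = \sum_a pi_old a * f a + v * (f x - f y).
  rewrite /d.
  under eq_bigr => a _ do rewrite mulrDl mulrBr mulrBl -!mulrA.
  by rewrite big_split /= sumrB -!mulr_sumr !sum_ind mulrBr.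
have Hsum f : \sum_a pibar a * f a = \sum_a pi_old a * f a + u * (f x - f y)
  by apply: Hsum0.
have Hsimp : in_simplex pibar.
  split.
    move=> a; have /andP[h1 _] := Hb2 a; have := Hp a; rewrite /pibar.
    have : eps * pi_old a <= pi_old a by rewrite ger_pMl ?ltW.
    lra.
  have := Hsum (fun _ => 1); under eq_bigr => a _ do rewrite mulr1.
  move=> ->; under eq_bigr => a _ do rewrite mulr1.
  by rewrite subrr mulr0 addr0; case: Hs.
have := H _ Hsimp; apply/negP; rewrite -ltNge.
have -> : drift_gspo pi_old r delta eps pibar =
          (1 - delta^-1) * \sum_a pibar a * adv pi_old r a.
  rewrite /drift_gspo mulr_sumr; apply: eq_bigr => a _ /=.
  have pa := Hp a.
  have rho : pibar a / pi_old a * pi_old a = pibar a by rewrite divfK // gt_eqF.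
  have /andP[h1 h2] := Hb2 a.
  have c1 : clip (pibar a / pi_old a) (1 - eps) (1 + eps) = pibar a / pi_old a.
    rewrite /clip.
    have -> : Num.max (pibar a / pi_old a) (1 - eps) = pibar a / pi_old a.
      apply/max_idPl; rewrite ler_pdivlMr // /pibar; lra.
    apply/min_idPl; rewrite ler_pdivrMr // /pibar; lra.
  rewrite c1 minxx.
  by field; rewrite !gt_eqF.
rewrite Hsum adv_sum // add0r /adv opprB addrA subrK.
rewrite /u.
have -> : (1 - delta^-1) * (- c * Num.sg k * (r x - r y)) = - (c * delta^-1 * (Num.sg k * k)).
  rewrite /k; by field; rewrite gt_eqF.
rewrite -normrEsg oppr_lt0 !mulr_gt0 ?invr_gt0 ?normr_gt0 //.
Qed.

End Aux.

Theorem lemma8 :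
  (* per-context statement *)
  (forall (R : realFieldType) (A : finType) (pi_old r : A -> R) (delta eps : R),
    in_simplex pi_old -> (forall a, 0 < pi_old a) ->
    (exists a b, r a != r b) ->
    0 < delta -> 0 < eps -> eps < 1 ->
    ((forall pibar : A -> R, in_simplex pibar -> 0 <= drift_gspo pi_old r delta eps pibar)
     <-> delta = 1))
  /\
  (* consequence: over all contexts *)
  (forall (R : realFieldType) (S : Type) (A : finType)
     (pi_old r : S -> A -> R) (delta : S -> R) (eps : R),
    (forall s, in_simplex (pi_old s)) -> (forall s a, 0 < pi_old s a) ->
    (forall s, exists a b, r s a != r s b) ->
    (forall s, 0 < delta s) -> 0 < eps -> eps < 1 ->
    ((forall s (pibar : A -> R), in_simplex pibar ->
        0 <= drift_gspo (pi_old s) (r s) (delta s) eps pibar)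
     <-> (forall s, delta s = 1))).
Proof.
split; first exact: part1.
move=> R S A pi_old r delta eps Hs Hp Hr Hd He He1; split.
  move=> H s; apply: (proj1 (@part1 R A _ _ _ _ (Hs s) (Hp s) (Hr s) (Hd s) He He1)) => pibar; apply: H.
move=> H s; apply: (proj2 (@part1 R A _ _ _ _ (Hs s) (Hp s) (Hr s) (Hd s) He He1)); exact: H.
Qed.
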